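(* Let $\mathcal X$ be a finite set, $f:\mathcal X\to\mathbb R$ with $\min_{x\in\mathcal X}f(x)=0$, $\mu$ a probability measure on $\mathcal X$, $\mathcal N(x)\subseteq\mathcal X$ neighborhoods, $\mathcal Df$ a fixed deterministic choice $\mathcal Df(x)\in\arg\min_{y\in\mathcal N(x)}f(y)$, and $\epsilon\in f(\mathcal X)$ with $\epsilon<\max_{\mathcal X}f$. Let $q(\cdot)$, $p_2(\cdot)$, $a$ be the quantities defined in the context for the algorithm $\mathcal G_1=\mathcal G_{1,\mathcal X\setminus\mathcal F(\mathcal Df)}$. If $$\sum_{j=0}^a\frac{p_2(j)}{(1-q(0))^{j+1}}\ge1,$$ then $$\sup_{p\in[0,1)}\xi_{\rm crit}(\mathcal G_{p,\mathcal X})\ \ge\ \xi_{\rm crit}(\mathcal G_1),$$ i.e. some algorithm of the class $\mathcal A_2=\{\mathcal G_{p,\mathcal X}:p\in[0,1)\}$ has asymptotic convergence exponent at least that of $\mathcal G_1$.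
   Context: Setting. For $p\in[0,1]$ and $A\subseteq\mathcal X$, the algorithm $\mathcal G_{p,A}$ is the Markov chain on $\mathcal X$ with generator $[\mathcal G\phi](x)=p\mathbf 1_A(x)\phi(\mathcal Df(x))+(1-p\mathbf 1_A(x))\mathbf E^\mu[\phi]-\phi(x)$: from $x\in A$ it moves to $\mathcal Df(x)$ with probability $p$ and otherwise jumps to a $\mu$-distributed point; from $x\notin A$ it jumps to a $\mu$-distributed point. Write $\mathcal D^kf$ for the $k$-fold iterate of $\mathcal Df$. Let $\mathcal L(\epsilon)=f^{-1}([0,\epsilon])$, $B(\epsilon)=\mathcal X\setminus\mathcal L(\epsilon)$, $\mathcal W(S)=\{x:\lim_{k\to\infty}\mathcal D^kf(x)\in S\}$, $\Gamma(\epsilon)=\mathcal X\setminus\mathcal W(\mathcal L(\epsilon))$, $\mathcal F(\mathcal Df)=\{x:\mathcal Df(x)=x\}$. For a given $A$: $d(x)=\min\{k\ge0:\mathcal D^kf(x)\in\mathcal F(\mathcal Df)\cup\mathcal L(\epsilon)\cup(\mathcal X\setminus A)\}$; $q(j)=\mu(\mathcal W(\mathcal L(\epsilon))\cap d^{-1}(j))$; $p_1(j)=\mu(\Gamma(\epsilon)\cap d^{-1}(j)\cap(\mathcal D^jf)^{-1}(A))$; $p_2(j)=\mu(\Gamma(\epsilon)\cap d^{-1}(j)\cap(\mathcal D^jf)^{-1}(\mathcal X\setminus A))$; $a=\max\{j:p_1(j)\vee p_2(j)>0\}$, $b=\max\{j:q(j)>0\}$; $\mathcal X_3=\{x:\mathcal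 D^{d(x)}f(x)\in A\cap B(\epsilon)\}$. Define $$Q(\xi,p)=1-\frac{(1-p)e^\xi}{1-pe^\xi}\sum_{j=0}^a p_1(j)-e^\xi\sum_{j=0}^a p_2(j)p^je^{j\xi}-(1-p)e^\xi\sum_{j=0}^{a\vee b}(q(j)+p_2(j))\sum_{i=0}^{j-1}p^ie^{i\xi},$$ with empty sums equal to $0$. It is known that if $\mathcal X_3=\emptyset$ then $Q(\cdot,p)$ has a unique positive root for every $p\in[0,1]$, and if $\mathcal X_3\neq\emptyset$ then $Q(\cdot,p)$ has a unique root in $(0,-\log p)$ for every $p\in[0,1)$ (with $-\log0=\infty$); this root is the critical exponent $\xi_{\rm crit}(\mathcal G_{p,A})$. In particular $\xi_{\rm crit}(\mathcal G_1)$ is the positive root of $1-e^\xi\sum_{j=0}^ap_2(j)e^{j\xi}=0$ (quantities for $A=\mathcal X\setminus\mathcal F(\mathcal Df)$), and for $p\in[0,1)$, $\xi_{\rm crit}(\mathcal G_{p,\mathcal X})$ is the root in $(0,-\log p)$ of $1-e^\xi+(1-p)e^\xi\sum_{j=0}^bq(j)p^je^{j\xi}=0$ (quantities for $A=\mathcal X$). For both choices of $A$, $d(x)=\min\{k\ge0:\mathcal D^kf(x)\in\mathcal F(\mathcal Df)\cup\mathcal L(\epsilon)\}$, so $q(\cdot)$ and $b$ are the same. *)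

(* Defs.v *)
From HB Require Import structures.
From mathcomp Require Import all_boot all_order all_algebra.
From mathcomp Require Import all_classical all_reals all_analysis.

Set Implicit Arguments.
Unset Strict Implicit.
Unset Printing Implicit Defensive.

Import Order.TTheory GRing.Theory Num.Theory.
Local Open Scope ring_scope.

Section CritDefs.
Variables (R : realType) (X : finType) (f : X -> R) (mu : X -> R)
  (Df : X -> X) (eps : R).

(* L(eps) = f^{-1}([0,eps]) (f >= 0 is a standing hypothesis), B(eps) its complement *)
Definition Lset : {set X} := finset (fun x => f x <= eps).
Definition Bset : {set X} := ~: Lset.
Definition Fix : {set X} := finset (fun x => Df x == x).
(* W(S) = {x : lim_k Df^k x in S}; on the finite (discrete) space X the limit
   exists iff the orbit is eventually constant, and is that constant value. *)
Definition Wset (S : {set X}) : {set X} :=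
  finset (fun x => `[< exists y, y \in S /\
            exists K, forall k, (K <= k)%N -> iter k Df x = y >]).
Definition Gamma : {set X} := ~: Wset Lset.
Definition Stop (A : {set X}) : {set X} := Fix :|: Lset :|: ~: A.
(* d^{-1}(j) = {x : d(x) = j} *)
Definition dlevel (A : {set X}) (j : nat) : {set X} :=
  finset (fun x => (iter j Df x \in Stop A) &&
                   [forall i : 'I_j, iter i Df x \notin Stop A]).
Definition meas (S : {set X}) : R := \sum_(x in S) mu x.

Definition qq (A : {set X}) (j : nat) : R := meas (Wset Lset :&: dlevel A j).
Definition p1 (A : {set X}) (j : nat) : R :=
  meas (Gamma :&: dlevel A j :&: finset (fun x => iter j Df x \in A)).
Definition p2 (A : {set X}) (j : nat) : R :=
  meas (Gamma :&: dlevel A j :&: finset (fun x => iter j Df x \notin A)).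

(* a = max{j : p1(j) v p2(j) > 0}, b = max{j : q(j) > 0}; since d(x) < #|X|
   whenever d(x) is defined, the max can be taken over j <= #|X|
   (0 if the set is empty, in which case all sums below vanish anyway). *)
Definition a_idx (A : {set X}) : nat :=
  (\max_(j < #|X|.+1 | ((0 < p1 A j)%R || (0 < p2 A j)%R)) (j : nat))%N.
Definition b_idx (A : {set X}) : nat :=
  (\max_(j < #|X|.+1 | (0 < qq A j)%R) (j : nat))%N.

Definition X3 (A : {set X}) : {set X} :=
  finset (fun x => `[< exists j, x \in dlevel A j /\
                          iter j Df x \in A :&: Bset >]).

Definition Qfun (A : {set X}) (p xi : R) : R :=
  1 - (1 - p) * expR xi / (1 - p * expR xi) * \sum_(0 <= j < (a_idx A).+1) p1 A j
    - expR xi * \sum_(0 <= j < (a_idx A).+1) p2 A j * p ^+ j * expR (j%:R * xi)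
    - (1 - p) * expR xi *
        \sum_(0 <= j < (maxn (a_idx A) (b_idx A)).+1)
           (qq A j + p2 A j) * \sum_(0 <= i < j) p ^+ i * expR (i%:R * xi).

(* critical exponent of G_{p,A}: the (unique, by the known result) root of Q(.,p)
   which is positive if X_3 is empty, and lies in (0, -log p) otherwise
   (-log 0 = +oo). *)
Definition xi_crit (A : {set X}) (p : R) : R :=
  if X3 A == finset.set0 then xget 0 (fun xi => 0 < xi /\ Qfun A p xi = 0)
  else xget 0 (fun xi => 0 < xi /\ (p = 0 \/ xi < - ln p) /\ Qfun A p xi = 0).

End CritDefs.

(* Main.v *)
Require Import Defs.
From HB Require Import structures.
From mathcomp Require Import all_boot all_order all_algebra.
From mathcomp Require Import all_classical all_reals all_analysis.
From mathcomp Require Import ring lra.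
Import Order.TTheory GRing.Theory Num.Theory.
Set Implicit Arguments. Unset Strict Implicit.
Local Open Scope ring_scope.

Lemma sum_single (R : numDomainType) (n j0 : nat) (c : R) :
  \sum_(0 <= j < n) (if j == j0 then c else 0) = if (j0 < n)%N then c else 0.
Proof.
elim: n => [|n IH]; first by rewrite big_geq.
rewrite big_nat_recr //= IH ltnS.
by case: (ltngtP j0 n) => h; rewrite ?addr0 ?add0r.
Qed.

Lemma sum_le_mono (R : numDomainType) (F : nat -> R) (n m : nat) :
  (forall j, 0 <= F j) -> (n <= m)%N ->
  \sum_(0 <= j < n) F j <= \sum_(0 <= j < m) F j.
Proof.
move=> F0 /subnKC <-; rewrite (@big_cat_nat _ _ _ n 0 (n + _)) //= ?leq_addr //.
by rewrite lerDl sumr_ge0.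
Qed.

Lemma term_le_sum (R : numDomainType) (F : nat -> R) (n i : nat) :
  (forall j, 0 <= F j) -> (i < n)%N -> F i <= \sum_(0 <= j < n) F j.
Proof.
move=> F0 hi; have := sum_le_mono F0 hi; apply: le_trans.
by rewrite big_nat_recr //= lerDr sumr_ge0.
Qed.

Section S.
Variables (R : realType) (X : finType) (f : X -> R) (mu : X -> R) (Df : X -> X) (eps : R).
Hypothesis mu0 : forall x, 0 <= mu x.
Hypothesis mu1 : \sum_(x : X) mu x = 1.

Lemma meas_ge0 (S : {set X}) : 0 <= meas mu S.
Proof. by apply: sumr_ge0. Qed.

Lemma meas_sub (S T : {set X}) : S \subset T -> meas mu S <= meas mu T.
Proof.
move/fintype.subsetP=> ST; rewrite /meas [X in X <= _]big_mkcond [X in _ <= X]big_mkcond.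
apply: ler_sum => x _; case: ifP => hS; first by rewrite (ST _ hS).
by case: ifP.
Qed.

Lemma meas_split (S W : {set X}) : meas mu (~: W :&: S) + meas mu (W :&: S) = meas mu S.
Proof.
rewrite /meas [X in X + _]big_mkcond [X in _ + X]big_mkcond [X in _ = X]big_mkcond.
rewrite -big_split; apply: eq_bigr => x _ /=; rewrite !finset.in_setI finset.in_setC.
by case: (x \in W); case: (x \in S); rewrite /= ?addr0 ?add0r.
Qed.

Lemma dlevel_uniq (A : {set X}) x j k : x \in dlevel f Df eps A j -> x \in dlevel f Df eps A k -> j = k.
Proof.
rewrite !inE => /andP[hj fj] /andP[hk fk].
case: (ltngtP j k) => // h.
- by move/forallP: fk => /(_ (Ordinal h)) /=; rewrite !inE hj.
- by move/forallP: fj => /(_ (Ordinal h)) /=; rewrite !inE hk.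
Qed.

Lemma sum_dlevel (A : {set X}) n : \sum_(0 <= j < n) meas mu (dlevel f Df eps A j) <= 1.
Proof.
rewrite -mu1 /meas.
under eq_bigr do rewrite big_mkcond.
rewrite exchange_big /=; apply: ler_sum => x _.
case: (pselect (exists j, x \in dlevel f Df eps A j)) => [[j0 hj0]|hn].
- under eq_bigr => j _ do have -> : (if x \in dlevel f Df eps A j then mu x else 0)
      = (if j == j0 then mu x else 0) by
      (case: ifP => h; [by rewrite (dlevel_uniq h hj0) eqxx |
        case: eqP => // e; by rewrite e hj0 in h]).
  by rewrite sum_single; case: ifP.
- rewrite big1 // => j _; case: ifP => // h; exfalso; apply: hn; by exists j.
Qed.
Notation A1 := (~: Fix Df).
Notation AX := [set: X].

Lemma Stop_eq : Stop f Df eps AX = Stop f Df eps A1.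
Proof.
apply/setP => x; rewrite /Stop !finset.in_setU !finset.in_setC negbK finset.in_setT /=.
by case: (x \in Fix Df); case: (x \in Lset f eps).
Qed.

Lemma dlevel_eq j : dlevel f Df eps AX j = dlevel f Df eps A1 j.
Proof. by rewrite /dlevel Stop_eq. Qed.

Lemma qq_eq j : qq f mu Df eps AX j = qq f mu Df eps A1 j.
Proof. by rewrite /qq dlevel_eq. Qed.

Lemma p2X0 j : p2 f mu Df eps AX j = 0.
Proof.
rewrite /p2 /meas; apply: big1 => x; rewrite !finset.in_setI inE finset.in_setT.
by rewrite andbF.
Qed.

Lemma p2_le_p1 j : p2 f mu Df eps A1 j <= p1 f mu Df eps AX j.
Proof.
rewrite /p2 /p1; apply: meas_sub; rewrite dlevel_eq.
apply/fintype.subsetP => x; rewrite !finset.in_setI !inE.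
by case/andP=> ->.
Qed.

Lemma p1qq j : p1 f mu Df eps AX j + qq f mu Df eps AX j
   = meas mu (dlevel f Df eps AX j).
Proof.
rewrite /p1 /qq /Gamma -[RHS](meas_split _ (Wset Df (Lset f eps))).
congr (_ + _); rewrite /meas; apply: eq_bigl => x; rewrite !finset.in_setI !inE.
by rewrite andbT.
Qed.

Lemma inner0 j (xi : R) : \sum_(0 <= i < j) 0 ^+ i * expR (i%:R * xi) = (0 < j)%:R.
Proof.
case: j => [|j]; first by rewrite big_geq.
rewrite big_nat_recl // expr0 mul0r expR0 mulr1 big1 ?addr0 // => i _.
by rewrite exprS !mul0r.
Qed.

Definition sX := \sum_(0 <= j < (a_idx f mu Df eps AX).+1) p1 f mu Df eps AX j
  + \sum_(0 <= j < (maxn (a_idx f mu Df eps AX) (b_idx f mu Df eps AX)).+1)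
       qq f mu Df eps AX j * (0 < j)%:R.

Lemma Q0 xi : Qfun f mu Df eps AX 0 xi = 1 - expR xi * sX.
Proof.
rewrite /Qfun /sX subr0 mul0r subr0 divr1 mul1r.
under [X in _ - expR xi * X - _]eq_bigr do rewrite p2X0 !mul0r.
rewrite big1_eq mulr0 subr0.
under [X in _ - expR xi * X = _]eq_bigr do rewrite inner0 p2X0 addr0.
by rewrite mulrDr opprD addrA.
Qed.

Lemma Q1 xi : Qfun f mu Df eps A1 1 xi
  = 1 - \sum_(0 <= j < (a_idx f mu Df eps A1).+1) p2 f mu Df eps A1 j * expR xi ^+ j.+1.
Proof.
rewrite /Qfun subrr !mul0r !subr0 big_distrr /=; congr (1 - _).
by apply: eq_bigr => j _; rewrite expr1n mulr1 expRM_natl exprS; ring.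
Qed.

Lemma xi_cases A p : xi_crit f mu Df eps A p = 0 \/
  (0 < xi_crit f mu Df eps A p /\ Qfun f mu Df eps A p (xi_crit f mu Df eps A p) = 0).
Proof.
rewrite /xi_crit; case: ifP => _.
- case: (pselect (exists xi, 0 < xi /\ Qfun f mu Df eps A p xi = 0)) => [h|h].
  + by right; apply: (xgetPex 0 h).
  + by left; apply: xgetPN => xi hx; apply: h; exists xi.
- case: (pselect (exists xi, 0 < xi /\ (p = 0 \/ xi < - ln p) /\ Qfun f mu Df eps A p xi = 0)) => [h|h].
  + right; have [? [_ ?]] := xgetPex 0 h; by split.
  + by left; apply: xgetPN => xi hx; apply: h; exists xi.
Qed.

Lemma xi_crit0 A : (exists xi, 0 < xi /\ Qfun f mu Df eps A 0 xi = 0) ->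
  0 < xi_crit f mu Df eps A 0 /\ Qfun f mu Df eps A 0 (xi_crit f mu Df eps A 0) = 0.
Proof.
move=> [xi [h1 h2]]; rewrite /xi_crit; case: ifP => _.
- by apply: (xgetPex 0 (P := fun xi => 0 < xi /\ Qfun f mu Df eps A 0 xi = 0)); exists xi.
- pose P := (fun y : R => 0 < y /\ ((0:R) = 0 \/ y < - ln 0) /\ Qfun f mu Df eps A 0 y = 0).
  have hP : exists y, P y by exists xi; split => //; split => //; left.
  by have [? [_ ?]] := xgetPex 0 hP.
Qed.
End S.

Local Open Scope classical_set_scope.

Theorem theorem2 (R : realType) (X : finType) (f : X -> R) (mu : X -> R)
  (N : X -> {set X}) (Df : X -> X) (eps : R) :
  (* min_X f = 0 *)
  (forall x, 0 <= f x) -> (exists x, f x = 0) ->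
  (* mu is a probability measure on X *)
  (forall x, 0 <= mu x) -> \sum_(x : X) mu x = 1 ->
  (* Df x in argmin_{y in N(x)} f y *)
  (forall x, Df x \in N x /\ (forall y, y \in N x -> f (Df x) <= f y)) ->
  (* eps in f(X), eps < max_X f *)
  (exists x, f x = eps) -> (exists x, eps < f x) ->
  1 <= \sum_(0 <= j < (a_idx f mu Df eps (~: Fix Df)).+1)
         p2 f mu Df eps (~: Fix Df) j
           / (1 - qq f mu Df eps (~: Fix Df) 0%N) ^+ j.+1 ->
  ((xi_crit f mu Df eps (~: Fix Df) 1)%:E <=
     ereal_sup [set (xi_crit f mu Df eps [set: X] p)%:E | p in [set p : R | (0 <= p < 1)%R]])%E.
Proof.
move=> f0 fz mu0 mu1 hDf heps hmax hyp.
set xi1 := xi_crit f mu Df eps (~: Fix Df) 1.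
set xi0 := xi_crit f mu Df eps [set: X] 0.
suff H : xi1 <= xi0.
  apply: (le_trans (y := xi0%:E)); first by rewrite lee_fin.
  by apply: ereal_sup_ubound; exists 0 => //=; rewrite lexx ltr01.
have c0 : 0 <= xi0.
  by rewrite /xi0; case: (xi_cases f mu Df eps [set: X] 0) => [->|[/ltW]].
rewrite /xi1; case: (xi_cases f mu Df eps (~: Fix Df) 1) => [->//|[x1pos hQ1]].
rewrite -/xi1 in x1pos hQ1 *.
rewrite Q1 in hQ1.
set e := expR xi1 in hQ1.
have e0 : 0 < e by apply: expR_gt0.
set a1 := a_idx f mu Df eps (~: Fix Df) in hQ1 hyp.
set aX := a_idx f mu Df eps [set: X].
have p2ge0 : forall A j, 0 <= p2 f mu Df eps A j by move=> A j; apply: meas_ge0.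
have p1ge0 : forall A j, 0 <= p1 f mu Df eps A j by move=> A j; apply: meas_ge0.
have qqge0 : forall A j, 0 <= qq f mu Df eps A j by move=> A j; apply: meas_ge0.
have hsum : \sum_(0 <= j < a1.+1) p2 f mu Df eps (~: Fix Df) j * e ^+ j.+1 = 1 by lra.
have [j [hj hp]] : exists j, (j < a1.+1)%N /\ 0 < p2 f mu Df eps (~: Fix Df) j.
  case: (pselect (exists j, (j < a1.+1)%N /\ 0 < p2 f mu Df eps (~: Fix Df) j)) => // hn.
  exfalso; move: hsum; rewrite big_nat big1 => [|k /andP[_ hk]].
    by move=> /eqP; rewrite eq_sym oner_eq0.
  have : ~ 0 < p2 f mu Df eps (~: Fix Df) k by move=> h; apply: hn; exists k.
  by have := p2ge0 (~: Fix Df) k; rewrite le_eqVlt => /orP[/eqP <- _|h []//]; rewrite mul0r.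
have ha1 : (a1 <= #|X|)%N by apply/bigmax_leqP => i _; rewrite -ltnS.
have hjo : (j < #|X|.+1)%N by apply: (leq_trans hj); rewrite ltnS.
have hjX : (j <= aX)%N.
  rewrite /aX /a_idx.
  apply: (leq_bigmax_cond (F := fun i : 'I_#|X|.+1 => nat_of_ord i) (Ordinal hjo)).
  by rewrite /= (lt_le_trans hp (p2_le_p1 _ _ _ _ j)).
set m := maxn aX (b_idx f mu Df eps [set: X]).
set S1 := \sum_(0 <= j < aX.+1) p1 f mu Df eps [set: X] j.
set S3 := \sum_(0 <= j < m.+1) qq f mu Df eps [set: X] j * (0 < j)%:R.
have hsX : sX f mu Df eps = S1 + S3 by [].
have S3ge0 : 0 <= S3 by apply: sumr_ge0 => i _; rewrite mulr_ge0 ?ler0n.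
have s0 : 0 < S1 + S3.
  have : p1 f mu Df eps [set: X] j <= S1 by apply: term_le_sum.
  have := p2_le_p1 f Df eps mu0 j; lra.
set q0 := qq f mu Df eps [set: X] 0.
have hq : S1 + S3 + q0 <= 1.
  have h1 : S1 <= \sum_(0 <= j < m.+1) p1 f mu Df eps [set: X] j.
    by apply: sum_le_mono; rewrite // ltnS leq_maxl.
  have h2 : S3 + q0 = \sum_(0 <= j < m.+1) qq f mu Df eps [set: X] j.
    rewrite /S3 big_nat_recl // [RHS]big_nat_recl // mulr0 add0r addrC.
    by congr (_ + _); apply: eq_bigr => i _; rewrite mulr1.
  have h3 : \sum_(0 <= j < m.+1) p1 f mu Df eps [set: X] j
          + \sum_(0 <= j < m.+1) qq f mu Df eps [set: X] j <= 1.
    rewrite -big_split /=.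
    under eq_bigr do rewrite p1qq.
    exact: sum_dlevel.
  lra.
rewrite -qq_eq -/q0 in hyp.
set d := 1 - q0 in hyp.
have d0 : 0 < d by rewrite /d; lra.
have hed : e * d <= 1.
  rewrite leNgt; apply/negP => hgt.
  have : \sum_(0 <= j < a1.+1) p2 f mu Df eps (~: Fix Df) j / d ^+ j.+1
      <= \sum_(0 <= j < a1.+1) p2 f mu Df eps (~: Fix Df) j * e ^+ j.+1 / (e * d).
    apply: ler_sum => i _; rewrite -mulrA; apply: ler_wpM2l => //.
    have u0 : 0 < d ^+ i by apply: exprn_gt0.
    have v0 : 0 < e ^+ i by apply: exprn_gt0.
    have uv : 1 <= e ^+ i * d ^+ i by rewrite -exprMn exprn_ege1 // ltW.
    rewrite !exprS.
    have -> : e * e ^+ i / (e * d) = e ^+ i / d by field; rewrite ?gt_eqF.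
    rewrite invfM mulrC; apply: ler_wpM2r; first by rewrite invr_ge0 ltW.
    have hu : d ^+ i * (d ^+ i)^-1 = 1 by rewrite mulfV // gt_eqF.
    have hu' : 0 < (d ^+ i)^-1 by rewrite invr_gt0.
    nra.
  rewrite -mulr_suml hsum mul1r.
  have hi : (e * d)^-1 < 1 by rewrite invf_lt1 // (lt_trans ltr01 hgt).
  lra.
have hsd : S1 + S3 <= d by rewrite /d; lra.
have hes : e * (S1 + S3) <= 1 by apply: le_trans hed; rewrite ler_wpM2l // ltW.
have sinv : (S1 + S3) * (S1 + S3)^-1 = 1 by rewrite mulfV // gt_eqF.
have sinv0 : 0 < (S1 + S3)^-1 by rewrite invr_gt0.
have [x0pos hQ0] : 0 < xi0 /\ Qfun f mu Df eps [set: X] 0 xi0 = 0.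
  apply: xi_crit0 => //.
  exists (ln (S1 + S3)^-1).
  have hE : expR (ln (S1 + S3)^-1) = (S1 + S3)^-1 by rewrite lnK // posrE.
  split.
    apply: (lt_le_trans x1pos); rewrite -ler_expR hE -/e; nra.
  by rewrite Q0 hsX hE mulVf ?subrr // gt_eqF.
rewrite Q0 hsX in hQ0.
rewrite -ler_expR -/e.
have : 0 < expR xi0 by apply: expR_gt0.
nra.
Qed.
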